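(* Let $\gamma>0$ and $\beta:\mathcal S\to(0,+\infty)$ of class $\mathcal C^1$ satisfy $x\beta_x(x,y)+\beta(x,y)>0$ for all $(x,y)\in\mathcal S$. Consider the uncontrolled BF-SIR model with initial condition $(x_0,y_0)\in\mathcal S$, $y_0>0$. Then: (i) if $R(x_0,y_0)\le1$, then $t\mapsto y(t)$ is strictly decreasing on $[0,\infty)$; (ii) if $R(x_0,y_0)>1$, then there exists a finite time $\hat t$ such that $t\mapsto y(t)$ is strictly increasing on $[0,\hat t]$ and strictly decreasing on $[\hat t,\infty)$.
   Context: $\mathcal S=\{(x,y)\in\mathbb R^2_+: x+y\le1\}$. Reproduction number $R(x,y)=\frac1\gamma\beta(x,y)x$. The uncontrolled BF-SIR model is $\dot x=-\gamma R(x,y)y$, $\dot y=\gamma(R(x,y)-1)y$; for every initial condition in $\mathcal S$ it has a unique $\mathcal C^1$ solution remaining in $\mathcal S$. *)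

(* Defs.v *)
From Stdlib Require Import Reals.
From Coquelicot Require Import Coquelicot.
Open Scope R_scope.

Definition inS (x y : R) : Prop := 0 <= x /\ 0 <= y /\ x + y <= 1.

Definition Rnum (gamma : R) (beta : R -> R -> R) (x y : R) : R :=
  / gamma * beta x y * x.

Definition C1_on_S (beta bx by_ : R -> R -> R) : Prop :=
  forall x y, inS x y ->
    is_derive (fun u => beta u y) x (bx x y) /\
    is_derive (fun v => beta x v) y (by_ x y) /\
    continuous (fun p : R * R => bx (fst p) (snd p)) (x, y) /\
    continuous (fun p : R * R => by_ (fst p) (snd p)) (x, y).

Definition is_BFSIR_solution (gamma : R) (beta : R -> R -> R)
    (x0 y0 : R) (x y : R -> R) : Prop :=
  x 0 = x0 /\ y 0 = y0 /\
  (forall t, 0 <= t -> inS (x t) (y t)) /\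
  filterlim x (at_right 0) (locally x0) /\
  filterlim y (at_right 0) (locally y0) /\
  (forall t, 0 < t ->
     is_derive x t (- gamma * Rnum gamma beta (x t) (y t) * y t) /\
     is_derive y t (gamma * (Rnum gamma beta (x t) (y t) - 1) * y t)).

(* Main.v *)
Require Import Defs.
From Stdlib Require Import Reals Lra Psatz Classical.
From Coquelicot Require Import Coquelicot.
Open Scope R_scope.

Definition CR (F : R -> R) (t : R) : Prop :=
  forall eps, 0 < eps -> exists del, 0 < del /\
    forall s, 0 <= s -> Rabs (s - t) < del -> Rabs (F s - F t) < eps.

Lemma deriv_cont f c l : is_derive f c l -> continuity_pt f c.
Proof.
  intros H. apply is_derive_Reals in H.
  apply derivable_continuous_pt. exists l. exact H.
Qed.

Lemma cpt_eps f c : continuity_pt f c -> forall eps, 0 < eps -> exists del, 0 < del /\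
  forall s, Rabs (s - c) < del -> Rabs (f s - f c) < eps.
Proof.
  intros H eps Heps. destruct (H eps Heps) as [del [Hd Hs]].
  exists del; split; [lra|]. intros s Hsc.
  destruct (Req_dec s c) as [->|Hne].
  - rewrite Rminus_diag, Rabs_R0; lra.
  - apply (Hs s). split; [split; [exact I| congruence] | exact Hsc].
Qed.

Lemma deriv_CR f c l : is_derive f c l -> CR f c.
Proof.
  intros H eps Heps. destruct (cpt_eps f c (deriv_cont f c l H) eps Heps) as [d [Hd Hs]].
  exists d; split; auto.
Qed.

Lemma right_CR f : filterlim f (at_right 0) (locally (f 0)) -> CR f 0.
Proof.
  intros H eps Heps. destruct (proj1 (filterlim_locally _ _) H (mkposreal eps Heps)) as [d Hd].
  exists d; split; [apply cond_pos|]. intros s Hs Hsd.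
  destruct (Req_dec s 0) as [->|Hne].
  - rewrite Rminus_diag, Rabs_R0; lra.
  - apply (Hd s); [exact Hsd| lra].
Qed.

Lemma MVT_strict f df a b : a < b -> (forall c, a < c < b -> is_derive f c (df c)) ->
  (forall c, a <= c <= b -> continuity_pt f c) ->
  exists c, a < c < b /\ f b - f a = df c * (b - a).
Proof.
  intros Hab Hd Hc.
  assert (pr1 : forall c, a < c < b -> derivable_pt f c).
  { intros c Hc'. exists (df c). apply is_derive_Reals. auto. }
  destruct (MVT f id a b pr1 (fun c _ => derivable_pt_id c) Hab Hc
     (fun c _ => derivable_continuous_pt _ _ (derivable_pt_id c))) as [c [P HP]].
  exists c; split; auto.
  rewrite (derive_pt_eq_0 f c (df c) (pr1 c P)) in HP.
  2: apply is_derive_Reals; auto.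
  rewrite derive_pt_id in HP. unfold id in HP. lra.
Qed.

Lemma MVT0 F dF s t : (forall c, 0 < c -> is_derive F c (dF c)) ->
  (forall c, 0 <= c -> CR F c) -> 0 <= s -> s < t ->
  exists c, s < c < t /\ F t - F s = dF c * (t - s).
Proof.
  intros HD HC Hs Hst.
  set (G := fun z => F (Rmax 0 z)).
  destruct (MVT_strict G dF s t Hst) as [c [Hc HG]].
  - intros c Hc. apply is_derive_ext_loc with F; [|apply HD; lra].
    exists (mkposreal c ltac:(lra)). intros z Hz. unfold G.
    change (Rabs (z - c) < c) in Hz. apply Rabs_def2 in Hz.
    rewrite Rmax_right; lra.
  - intros c Hc eps Heps. destruct (HC c ltac:(lra) eps Heps) as [d [Hd Hs']].
    exists d; split; [lra|]. intros z [_ Hz]. unfold G. simpl in *. unfold R_dist in *.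
    rewrite (Rmax_right 0 c) by lra. apply Hs'. apply Rmax_l.
    unfold Rmax; destruct (Rle_dec 0 z).
    + auto.
    + apply Rabs_def2 in Hz. apply Rabs_def1; lra.
  - exists c; split; auto. unfold G in HG.
    rewrite (Rmax_right 0 t), (Rmax_right 0 s) in HG by lra. exact HG.
Qed.


Lemma first_exit F a t1 d0 : 0 <= a -> (forall c, 0 <= c -> CR F c) -> 0 < d0 ->
  (forall r, a < r < a + d0 -> 0 < F r) -> a < t1 -> F t1 <= 0 ->
  exists m, a < m <= t1 /\ (forall r, a < r < m -> 0 < F r) /\ F m = 0.
Proof.
  intros Ha HC Hd0 Hstart Ht1 HF1.
  set (E := fun s => a <= s <= t1 /\ forall r, a < r <= s -> 0 < F r).
  assert (Eb : bound E). { exists t1. intros s [Hs _]. lra. }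
  assert (Ee : exists s, E s). { exists a. split; [lra|]. intros r Hr; lra. }
  destruct (completeness E Eb Ee) as [m [Hub Hlub]].
  set (s0 := a + Rmin (d0/2) ((t1 - a)/2)).
  assert (Hs0 : E s0).
  { unfold s0; split.
    - split; [|]; pose proof (Rmin_l (d0/2) ((t1-a)/2)); pose proof (Rmin_r (d0/2) ((t1-a)/2));
      try (apply Rmin_glb_lt in Hd0); unfold Rmin in *; destruct Rle_dec; lra.
    - intros r Hr. apply Hstart. pose proof (Rmin_l (d0/2) ((t1-a)/2)). lra. }
  assert (Hm0 : a < m).
  { pose proof (Hub s0 Hs0). unfold s0 in *. unfold Rmin in *; destruct Rle_dec; lra. }
  assert (Hm1 : m <= t1). { apply Hlub. intros s [Hs _]; lra. }
  assert (Hpos : forall r, a < r < m -> 0 < F r).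
  { intros r Hr. destruct (classic (exists s, E s /\ r <= s)) as [[s [[_ Hs] Hrs]]|Hn].
    - apply Hs; lra.
    - exfalso. assert (m <= r); [|lra]. apply Hlub. intros s Hs.
      destruct (Rle_dec s r); auto. exfalso; apply Hn; exists s; split; auto; lra. }
  exists m. split; [lra|]. split; [exact Hpos|].
  destruct (Rtotal_order (F m) 0) as [Hlt|[Heq|Hgt]]; auto; exfalso.
  - destruct (HC m ltac:(lra) (- F m) ltac:(lra)) as [d [Hd Hs]].
    set (r := Rmax (m - d/2) ((a+m)/2)).
    assert (Hr : a < r < m /\ Rabs (r - m) < d).
    { unfold r, Rmax; destruct Rle_dec; split; try lra; apply Rabs_def1; lra. }
    specialize (Hs r ltac:(lra) (proj2 Hr)). specialize (Hpos r (proj1 Hr)).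
    apply Rabs_def2 in Hs. lra.
  - destruct (HC m ltac:(lra) (F m) ltac:(lra)) as [d [Hd Hs]].
    destruct (Req_dec m t1) as [->|Hne]; [lra|].
    set (r := Rmin (m + d/2) t1).
    assert (Hr : m < r <= t1 /\ Rabs (r - m) < d).
    { unfold r, Rmin; destruct Rle_dec; split; try lra; apply Rabs_def1; lra. }
    assert (E r).
    { split; [lra|]. intros q Hq. destruct (Rlt_dec q m) as [Hqm|Hqm]; [apply Hpos; lra| apply Rnot_lt_le in Hqm].
      assert (Rabs (q - m) < d) by (pose proof (Rmin_l (m + d/2) t1); fold r in H; apply Rabs_def1; lra).
      specialize (Hs q ltac:(lra) H). apply Rabs_def2 in Hs. lra. }
    specialize (Hub r H). lra.
Qed.

Lemma CR_opp F c : CR F c -> CR (fun t => - F t) c.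
Proof.
  intros H eps He. destruct (H eps He) as [d [Hd Hs]]. exists d; split; auto.
  intros s Hs0 Hsd. specialize (Hs s Hs0 Hsd).
  replace (- F s - - F c) with (- (F s - F c)) by ring. rewrite Rabs_Ropp; auto.
Qed.

Lemma CR_mult F G c : CR F c -> CR G c -> CR (fun t => F t * G t) c.
Proof.
  intros HF HG eps He.
  set (e1 := Rmin 1 (eps / (2 * (Rabs (G c) + 1)))).
  set (e2 := Rmin 1 (eps / (2 * (Rabs (F c) + 2)))).
  assert (Ha : 0 < Rabs (G c) + 1) by (pose proof (Rabs_pos (G c)); lra).
  assert (Hb : 0 < Rabs (F c) + 2) by (pose proof (Rabs_pos (F c)); lra).
  assert (He1 : 0 < e1). { unfold e1, Rmin; destruct Rle_dec; [lra|]. apply Rdiv_lt_0_compat; lra. }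
  assert (He2 : 0 < e2). { unfold e2, Rmin; destruct Rle_dec; [lra|]. apply Rdiv_lt_0_compat; lra. }
  destruct (HF e1 He1) as [d1 [Hd1 H1]]. destruct (HG e2 He2) as [d2 [Hd2 H2]].
  exists (Rmin d1 d2). split; [apply Rmin_glb_lt; auto|].
  intros s Hs Hsd. assert (Hs1 := H1 s Hs ltac:(pose proof (Rmin_l d1 d2); lra)).
  assert (Hs2 := H2 s Hs ltac:(pose proof (Rmin_r d1 d2); lra)).
  replace (F s * G s - F c * G c) with ((F s - F c) * G c + F s * (G s - G c)) by ring.
  eapply Rle_lt_trans; [apply Rabs_triang|]. rewrite !Rabs_mult.
  assert (HFs : Rabs (F s) <= Rabs (F c) + 1).
  { replace (F s) with (F c + (F s - F c)) by ring. eapply Rle_trans; [apply Rabs_triang|].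
    assert (e1 <= 1) by apply Rmin_l. lra. }
  assert (A1 : Rabs (F s - F c) * Rabs (G c) <= e1 * Rabs (G c)).
  { apply Rmult_le_compat_r; [apply Rabs_pos| lra]. }
  assert (A2 : e1 * (Rabs (G c) + 1) <= eps / 2).
  { assert (e1 <= eps / (2 * (Rabs (G c) + 1))) by apply Rmin_r.
    apply Rmult_le_compat_r with (r := Rabs (G c) + 1) in H; [|lra].
    replace (eps / (2 * (Rabs (G c) + 1)) * (Rabs (G c) + 1)) with (eps/2) in H by (field; lra). lra. }
  assert (A3 : Rabs (F s) * Rabs (G s - G c) <= (Rabs (F c) + 2) * e2).
  { apply Rmult_le_compat; try apply Rabs_pos; lra. }
  assert (A4 : (Rabs (F c) + 2) * e2 <= eps / 2).
  { assert (e2 <= eps / (2 * (Rabs (F c) + 2))) by apply Rmin_r.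
    apply Rmult_le_compat_l with (r := Rabs (F c) + 2) in H; [|lra].
    replace ((Rabs (F c) + 2) * (eps / (2 * (Rabs (F c) + 2)))) with (eps/2) in H by (field; lra). lra. }
  assert (0 <= Rabs (G c)) by apply Rabs_pos.
  assert (e1 * Rabs (G c) < e1 * (Rabs (G c) + 1)) by (apply Rmult_lt_compat_l; lra).
  lra.
Qed.


Lemma cont2_eps (g : R -> R -> R) a b :
  continuous (fun p : R * R => g (fst p) (snd p)) (a, b) ->
  forall eps, 0 < eps -> exists del, 0 < del /\ forall p q,
    Rabs (p - a) < del -> Rabs (q - b) < del -> Rabs (g p q - g a b) < eps.
Proof.
  intros H eps He.
  destruct (proj1 (filterlim_locally _ _) H (mkposreal eps He)) as [d Hd].
  exists d; split; [apply cond_pos|]. intros p q Hp Hq.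
  exact (Hd (p, q) (conj Hp Hq)).
Qed.

Lemma between_abs a p w : Rmin a p <= w <= Rmax a p -> Rabs (w - a) <= Rabs (p - a).
Proof.
  unfold Rmin, Rmax; destruct Rle_dec; intros [H1 H2];
  unfold Rabs; repeat destruct Rcase_abs; lra.
Qed.

Lemma inS_segx a p v w : inS a v -> inS p v -> Rmin a p <= w <= Rmax a p -> inS w v.
Proof. unfold inS, Rmin, Rmax; destruct Rle_dec; lra. Qed.

Lemma inS_segy u a p w : inS u a -> inS u p -> Rmin a p <= w <= Rmax a p -> inS u w.
Proof. unfold inS, Rmin, Rmax; destruct Rle_dec; lra. Qed.

Lemma MVTx beta bx by_ a p v : C1_on_S beta bx by_ -> inS a v -> inS p v ->
  exists xi, Rmin a p <= xi <= Rmax a p /\ beta p v - beta a v = bx xi v * (p - a).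
Proof.
  intros HC Ha Hp.
  apply (MVT_gen (fun w => beta w v) a p (fun w => bx w v)).
  - intros w Hw. apply (HC w v). apply (inS_segx a p); auto; lra.
  - intros w Hw. apply (deriv_cont _ _ (bx w v)). apply (HC w v). apply (inS_segx a p); auto.
Qed.

Lemma MVTy beta bx by_ a p u : C1_on_S beta bx by_ -> inS u a -> inS u p ->
  exists eta, Rmin a p <= eta <= Rmax a p /\ beta u p - beta u a = by_ u eta * (p - a).
Proof.
  intros HC Ha Hp.
  apply (MVT_gen (fun w => beta u w) a p (fun w => by_ u w)).
  - intros w Hw. apply (HC u w). apply (inS_segy u a p); auto; lra.
  - intros w Hw. apply (deriv_cont _ _ (by_ u w)). apply (HC u w). apply (inS_segy u a p); auto.
Qed.

Lemma decomp beta bx by_ a b p q : C1_on_S beta bx by_ -> inS a b -> inS p q ->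
  exists x1 y1 x2 y2, inS x1 y1 /\ inS x2 y2 /\
    Rabs (x1 - a) <= Rabs (p - a) /\ Rabs (y1 - b) <= Rabs (q - b) /\
    Rabs (x2 - a) <= Rabs (p - a) /\ Rabs (y2 - b) <= Rabs (q - b) /\
    beta p q - beta a b = bx x1 y1 * (p - a) + by_ x2 y2 * (q - b).
Proof.
  intros HC Hab Hpq.
  assert (Z : forall c, Rabs (c - c) <= Rabs (q - b)) by
    (intros; rewrite Rminus_diag, Rabs_R0; apply Rabs_pos).
  assert (Z' : forall c, Rabs (c - c) <= Rabs (p - a)) by
    (intros; rewrite Rminus_diag, Rabs_R0; apply Rabs_pos).
  destruct (Rle_dec p a) as [Hpa|Hpa].
  - assert (HM : inS p b) by (unfold inS in *; lra).
    destruct (MVTx beta bx by_ a p b HC Hab HM) as [xi [Hxi E1]].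
    destruct (MVTy beta bx by_ b q p HC HM Hpq) as [eta [Heta E2]].
    exists xi, b, p, eta. split; [|split; [|split; [|split; [|split; [|split]]]]].
    + apply (inS_segx a p b xi); auto.
    + apply (inS_segy p b q eta); auto.
    + apply between_abs; auto.
    + apply Z.
    + apply Rle_refl.
    + apply between_abs; auto.
    + lra.
  - assert (HM : inS a q) by (unfold inS in *; lra).
    destruct (MVTx beta bx by_ a p q HC HM Hpq) as [xi [Hxi E1]].
    destruct (MVTy beta bx by_ b q a HC Hab HM) as [eta [Heta E2]].
    exists xi, q, a, eta. split; [|split; [|split; [|split; [|split; [|split]]]]].
    + apply (inS_segx a p q xi); auto.
    + apply (inS_segy a b q eta); auto.
    + apply between_abs; auto.
    + apply Rle_refl.
    + apply Z'.
    + apply between_abs; auto.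
    + lra.
Qed.

Lemma beta_cont beta bx by_ a b : C1_on_S beta bx by_ -> inS a b ->
  forall eps, 0 < eps -> exists del, 0 < del /\ forall p q, inS p q ->
    Rabs (p - a) < del -> Rabs (q - b) < del -> Rabs (beta p q - beta a b) < eps.
Proof.
  intros HC Hab eps He.
  destruct (HC a b Hab) as [_ [_ [Cx Cy]]].
  destruct (cont2_eps bx a b Cx 1 ltac:(lra)) as [d1 [Hd1 H1]].
  destruct (cont2_eps by_ a b Cy 1 ltac:(lra)) as [d2 [Hd2 H2]].
  set (K := Rabs (bx a b) + Rabs (by_ a b) + 2).
  assert (HK : 0 < K) by (unfold K; pose proof (Rabs_pos (bx a b)); pose proof (Rabs_pos (by_ a b)); lra).
  exists (Rmin (Rmin d1 d2) (eps / (3 * K))). split.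
  { repeat apply Rmin_glb_lt; auto. apply Rdiv_lt_0_compat; lra. }
  intros p q Hpq Hp Hq.
  pose proof (Rmin_l (Rmin d1 d2) (eps / (3 * K))) as M1.
  pose proof (Rmin_r (Rmin d1 d2) (eps / (3 * K))) as M2.
  pose proof (Rmin_l d1 d2). pose proof (Rmin_r d1 d2).
  destruct (decomp beta bx by_ a b p q HC Hab Hpq) as [x1 [y1 [x2 [y2 [_ [_ [A1 [A2 [A3 [A4 E]]]]]]]]]].
  rewrite E.
  assert (B1 : Rabs (bx x1 y1) <= K).
  { specialize (H1 x1 y1 ltac:(lra) ltac:(lra)).
    replace (bx x1 y1) with (bx a b + (bx x1 y1 - bx a b)) by ring.
    eapply Rle_trans; [apply Rabs_triang|]. unfold K. pose proof (Rabs_pos (by_ a b)). lra. }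
  assert (B2 : Rabs (by_ x2 y2) <= K).
  { specialize (H2 x2 y2 ltac:(lra) ltac:(lra)).
    replace (by_ x2 y2) with (by_ a b + (by_ x2 y2 - by_ a b)) by ring.
    eapply Rle_trans; [apply Rabs_triang|]. unfold K. pose proof (Rabs_pos (bx a b)). lra. }
  eapply Rle_lt_trans; [apply Rabs_triang|]. rewrite !Rabs_mult.
  assert (Rabs (bx x1 y1) * Rabs (p - a) <= K * (eps / (3 * K))).
  { apply Rmult_le_compat; try apply Rabs_pos; lra. }
  assert (Rabs (by_ x2 y2) * Rabs (q - b) <= K * (eps / (3 * K))).
  { apply Rmult_le_compat; try apply Rabs_pos; lra. }
  assert (K * (eps / (3 * K)) = eps / 3) by (field; lra).
  lra.
Qed.


Lemma CR_ext F G c : (forall t, F t = G t) -> CR F c -> CR G c.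
Proof. intros E H eps He. destruct (H eps He) as [d [Hd Hs]]. exists d; split; auto.
  intros s H1 H2. rewrite <- !E. auto. Qed.

Lemma CR_const k c : CR (fun _ => k) c.
Proof. intros eps He. exists 1; split; [lra|]. intros. rewrite Rminus_diag, Rabs_R0; auto. Qed.

Lemma CR_plus F G c : CR F c -> CR G c -> CR (fun t => F t + G t) c.
Proof.
  intros HF HG eps He. destruct (HF (eps/2) ltac:(lra)) as [d1 [Hd1 H1]].
  destruct (HG (eps/2) ltac:(lra)) as [d2 [Hd2 H2]].
  exists (Rmin d1 d2); split; [apply Rmin_glb_lt; auto|]. intros s Hs Hsd.
  pose proof (Rmin_l d1 d2). pose proof (Rmin_r d1 d2).
  specialize (H1 s Hs ltac:(lra)). specialize (H2 s Hs ltac:(lra)).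
  replace (F s + G s - (F c + G c)) with ((F s - F c) + (G s - G c)) by ring.
  eapply Rle_lt_trans; [apply Rabs_triang|]. lra.
Qed.

Lemma MVT_between F dF u s : (forall c, 0 < c -> is_derive F c (dF c)) ->
  (forall c, 0 <= c -> CR F c) -> 0 <= u -> 0 <= s -> s <> u ->
  exists c, 0 < c /\ Rabs (c - u) < Rabs (s - u) /\ F s - F u = dF c * (s - u).
Proof.
  intros HD HC Hu Hs Hne. destruct (Rlt_dec s u) as [Hlt|Hge].
  - destruct (MVT0 F dF s u HD HC Hs Hlt) as [c [Hc E]].
    exists c; split; [lra|]. split.
    + rewrite !Rabs_left; lra.
    + lra.
  - assert (u < s) by lra. destruct (MVT0 F dF u s HD HC Hu H) as [c [Hc E]].
    exists c; split; [lra|]. split.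
    + rewrite !Rabs_right; lra.
    + lra.
Qed.

Section Main.
Variables (gamma : R) (beta bx by_ : R -> R -> R) (x0 y0 : R) (x y : R -> R).
Hypothesis Hg : 0 < gamma.
Hypothesis Hbpos : forall a b, inS a b -> 0 < beta a b.
Hypothesis HC1 : C1_on_S beta bx by_.
Hypothesis Hsign : forall a b, inS a b -> a * bx a b + beta a b > 0.
Hypothesis HS0 : inS x0 y0.
Hypothesis Hy0 : 0 < y0.
Hypothesis Hsol : is_BFSIR_solution gamma beta x0 y0 x y.

Definition dxf c := - gamma * Rnum gamma beta (x c) (y c) * y c.
Definition dyf c := gamma * (Rnum gamma beta (x c) (y c) - 1) * y c.
Definition Hf t := Rnum gamma beta (x t) (y t) - 1.

Lemma Hx0 : x 0 = x0. Proof. apply Hsol. Qed.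
Lemma Hy00 : y 0 = y0. Proof. apply Hsol. Qed.
Lemma HinS t : 0 <= t -> inS (x t) (y t). Proof. apply Hsol. Qed.
Lemma Hdx c : 0 < c -> is_derive x c (dxf c). Proof. intros. apply Hsol; auto. Qed.
Lemma Hdy c : 0 < c -> is_derive y c (dyf c). Proof. intros. apply Hsol; auto. Qed.

Lemma CRx c : 0 <= c -> CR x c.
Proof.
  intros Hc. destruct (Req_dec c 0) as [->|Hne].
  - apply right_CR. rewrite Hx0. apply Hsol.
  - apply (deriv_CR _ _ _ (Hdx c ltac:(lra))).
Qed.

Lemma CRy c : 0 <= c -> CR y c.
Proof.
  intros Hc. destruct (Req_dec c 0) as [->|Hne].
  - apply right_CR. rewrite Hy00. apply Hsol.
  - apply (deriv_CR _ _ _ (Hdy c ltac:(lra))).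
Qed.

Lemma CRbeta c : 0 <= c -> CR (fun t => beta (x t) (y t)) c.
Proof.
  intros Hc eps He.
  destruct (beta_cont beta bx by_ (x c) (y c) HC1 (HinS c Hc) eps He) as [d [Hd Hb]].
  destruct (CRx c Hc d Hd) as [d1 [Hd1 H1]]. destruct (CRy c Hc d Hd) as [d2 [Hd2 H2]].
  exists (Rmin d1 d2); split; [apply Rmin_glb_lt; auto|]. intros s Hs Hsd.
  pose proof (Rmin_l d1 d2). pose proof (Rmin_r d1 d2).
  apply Hb; [apply HinS; auto| apply H1 | apply H2]; auto; lra.
Qed.

Lemma CRH c : 0 <= c -> CR Hf c.
Proof.
  intros Hc. apply CR_ext with (fun t => / gamma * (beta (x t) (y t) * x t) + (-1)).
  { intros t. unfold Hf, Rnum. ring. }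
  apply CR_plus; [|apply CR_const].
  apply CR_mult; [apply CR_const|]. apply CR_mult; [apply CRbeta; auto| apply CRx; auto].
Qed.

Lemma Rnum_nonneg t : 0 <= t -> 0 <= Rnum gamma beta (x t) (y t).
Proof.
  intros Ht. unfold Rnum. pose proof (HinS t Ht) as HS. pose proof (Hbpos _ _ HS).
  unfold inS in HS. apply Rmult_le_pos; [|lra]. apply Rmult_le_pos; [|lra].
  left; apply Rinv_0_lt_compat; auto.
Qed.

Lemma ypos t : 0 <= t -> 0 < y t.
Proof.
  intros Ht. destruct (Req_dec t 0) as [->|Hne]; [rewrite Hy00; auto|].
  set (G := fun s => y s * exp (gamma * s)).
  set (dG := fun s => dyf s * exp (gamma * s) + y s * (gamma * exp (gamma * s))).
  assert (HD : forall c, 0 < c -> is_derive G c (dG c)).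
  { intros c Hc. unfold G, dG.
    assert (De : is_derive (fun s => exp (gamma * s)) c (gamma * exp (gamma * c))).
    { assert (D1 : is_derive (fun s => gamma * s) c gamma).
      { auto_derive; auto; ring. }
      pose proof (is_derive_comp exp (fun s => gamma * s) c _ _ (is_derive_exp _) D1) as D2.
      exact D2. }
    exact (is_derive_mult y (fun s => exp (gamma * s)) c _ _ (Hdy c Hc) De Rmult_comm). }
  assert (HCG : forall c, 0 <= c -> CR G c).
  { intros c Hc. apply CR_mult; [apply CRy; auto|].
    apply (deriv_CR _ _ (gamma * exp (gamma * c))). auto_derive; auto; ring. }
  destruct (MVT0 G dG 0 t HD HCG ltac:(lra) ltac:(lra)) as [c [Hc E]].
  assert (0 <= dG c).
  { unfold dG, dyf. pose proof (Rnum_nonneg c ltac:(lra)). pose proof (HinS c ltac:(lra)) as HS.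
    unfold inS in HS. pose proof (exp_pos (gamma * c)).
    replace ((gamma * (Rnum gamma beta (x c) (y c) - 1) * y c * exp (gamma * c) +
       y c * (gamma * exp (gamma * c)))) with
      (gamma * Rnum gamma beta (x c) (y c) * y c * exp (gamma * c)) by ring.
    apply Rmult_le_pos; [|lra]. apply Rmult_le_pos; [|lra]. apply Rmult_le_pos; lra. }
  unfold G in E. rewrite Hy00, Rmult_0_r, exp_0 in E.
  assert (0 < y t * exp (gamma * t)) by nra.
  pose proof (exp_pos (gamma * t)). nra.
Qed.


Lemma Kzero u : 0 <= u -> Hf u = 0 -> exists del, 0 < del /\
  forall s, 0 <= s -> s <> u -> Rabs (s - u) < del -> Hf s * (s - u) < 0.
Proof.
  intros Hu HHu.
  set (a := x u). set (b := y u).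
  assert (Hab : inS a b) by (apply HinS; auto).
  assert (Hb : 0 < b) by (apply ypos; auto).
  assert (Hba : beta a b * a = gamma).
  { unfold Hf, Rnum in HHu. fold a b in HHu.
    apply (Rmult_eq_reg_l (/ gamma)); [|apply Rinv_neq_0_compat; lra].
    rewrite Rinv_l by lra. lra. }
  assert (Hbab : 0 < beta a b) by auto.
  assert (Ha : 0 < a).
  { destruct Hab as [Ha0 _]. destruct Ha0 as [|Ha0]; auto. rewrite <- Ha0 in Hba. lra. }
  set (A := a * bx a b + beta a b).
  assert (HA : 0 < A) by (apply Hsign; auto).
  destruct (HC1 a b Hab) as [_ [_ [Cx Cy]]].
  destruct (cont2_eps bx a b Cx (A / (4 * a))) as [dx [Hdx' Hx']].
  { apply Rdiv_lt_0_compat; lra. }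
  destruct (cont2_eps by_ a b Cy 1 ltac:(lra)) as [dy [Hdy' Hy']].
  destruct (beta_cont beta bx by_ a b HC1 Hab (A / 4) ltac:(lra)) as [db [Hdb Hb']].
  set (rho := Rmin dx (Rmin dy db)).
  assert (Hrho : 0 < rho) by (unfold rho; repeat apply Rmin_glb_lt; auto).
  assert (R1 : rho <= dx) by apply Rmin_l.
  assert (R2 : rho <= dy) by (unfold rho; eapply Rle_trans; [apply Rmin_r| apply Rmin_l]).
  assert (R3 : rho <= db) by (unfold rho; eapply Rle_trans; [apply Rmin_r| apply Rmin_r]).
  set (Bb := Rabs (by_ a b) + 1).
  assert (HBb : 1 <= Bb) by (unfold Bb; pose proof (Rabs_pos (by_ a b)); lra).
  set (eH := Rmin (1/2) (b * A / (16 * a * Bb))).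
  assert (HeH : 0 < eH).
  { unfold eH; apply Rmin_glb_lt; [lra|]. apply Rdiv_lt_0_compat; [nra|].
    apply Rmult_lt_0_compat; [|lra]; lra. }
  destruct (CRx u Hu rho Hrho) as [d1 [Hd1 D1]].
  destruct (CRy u Hu rho Hrho) as [d2 [Hd2 D2]].
  destruct (CRy u Hu (b/2) ltac:(lra)) as [d3 [Hd3 D3]].
  destruct (CRH u Hu eH HeH) as [d4 [Hd4 D4]].
  set (del := Rmin (Rmin d1 d2) (Rmin d3 d4)).
  assert (Hdel : 0 < del) by (unfold del; repeat apply Rmin_glb_lt; auto).
  assert (E1 : del <= d1) by (unfold del; eapply Rle_trans; [apply Rmin_l| apply Rmin_l]).
  assert (E2 : del <= d2) by (unfold del; eapply Rle_trans; [apply Rmin_l| apply Rmin_r]).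
  assert (E3 : del <= d3) by (unfold del; eapply Rle_trans; [apply Rmin_r| apply Rmin_l]).
  assert (E4 : del <= d4) by (unfold del; eapply Rle_trans; [apply Rmin_r| apply Rmin_r]).
  exists del; split; auto.
  intros s Hs Hne Hsd.
  set (p := x s). set (q := y s).
  assert (Hpq : inS p q) by (apply HinS; auto).
  assert (Hp : Rabs (p - a) < rho) by (apply D1; auto; lra).
  assert (Hq : Rabs (q - b) < rho) by (apply D2; auto; lra).
  destruct (decomp beta bx by_ a b p q HC1 Hab Hpq) as
    [x1 [y1 [x2 [y2 [_ [_ [A1 [A2 [A3 [A4 EB]]]]]]]]]].
  destruct (MVT_between x dxf u s Hdx CRx Hu Hs Hne) as [c1 [Hc1 [Hc1u EX]]].
  destruct (MVT_between y dyf u s Hdy CRy Hu Hs Hne) as [c2 [Hc2 [Hc2u EY]]].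
  fold p a in EX. fold q b in EY.
  assert (K1 : A / 2 < beta p q + a * bx x1 y1).
  { assert (Hbx := Hx' x1 y1 ltac:(lra) ltac:(lra)).
    assert (Hbe := Hb' p q Hpq ltac:(lra) ltac:(lra)).
    apply Rabs_def2 in Hbx. apply Rabs_def2 in Hbe.
    assert (a * (bx x1 y1 - bx a b) > - (A / 4)).
    { assert (a * (A / (4 * a)) = A / 4) by (field; lra). nra. }
    unfold A in *. lra. }
  assert (HH1 : Rabs (Hf c1) < eH) by
    (replace (Hf c1) with (Hf c1 - 0) by ring; rewrite <- HHu; apply D4; lra).
  assert (HH2 : Rabs (Hf c2) < eH) by
    (replace (Hf c2) with (Hf c2 - 0) by ring; rewrite <- HHu; apply D4; lra).
  assert (Hy1 : b / 2 < y c1).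
  { assert (Rabs (y c1 - b) < b/2) by (apply D3; lra). apply Rabs_def2 in H. lra. }
  assert (HeH1 : eH <= 1/2) by apply Rmin_l.
  assert (HeH2 : eH <= b * A / (16 * a * Bb)) by apply Rmin_r.
  assert (Rn1 : 1/2 < Rnum gamma beta (x c1) (y c1)).
  { apply Rabs_def2 in HH1. unfold Hf in HH1. lra. }
  assert (Hby2 : Rabs (by_ x2 y2) <= Bb).
  { assert (Hh := Hy' x2 y2 ltac:(lra) ltac:(lra)).
    replace (by_ x2 y2) with (by_ a b + (by_ x2 y2 - by_ a b)) by ring.
    eapply Rle_trans; [apply Rabs_triang|]. unfold Bb. lra. }
  assert (Hy2 : 0 < y c2 <= 1).
  { split; [apply ypos; lra|]. pose proof (HinS c2 ltac:(lra)) as HS; unfold inS in HS; lra. }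
  assert (ID : gamma * Hf s = (p - a) * (beta p q + a * bx x1 y1) + a * by_ x2 y2 * (q - b)).
  { unfold Hf, Rnum. fold p q.
    replace (gamma * (/ gamma * beta p q * p - 1)) with (beta p q * p - gamma) by (field; lra).
    rewrite <- Hba.
    replace (beta p q * p - beta a b * a) with ((p - a) * beta p q + a * (beta p q - beta a b)) by ring.
    rewrite EB. ring. }
  unfold dxf, dyf in EX, EY.
  set (K := beta p q + a * bx x1 y1) in *.
  set (T1 := Rnum gamma beta (x c1) (y c1) * y c1 * K).
  set (T2 := a * by_ x2 y2 * Hf c2 * y c2).
  assert (ID2 : gamma * Hf s * (s - u) = gamma * (s - u) * (s - u) * (- T1 + T2)).
  { rewrite ID, EX, EY. unfold T1, T2, Hf. ring. }
  assert (HT1 : b * A / 8 < T1).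
  { unfold T1. assert (0 < Rnum gamma beta (x c1) (y c1) * y c1) by nra.
    assert (b / 4 < Rnum gamma beta (x c1) (y c1) * y c1) by nra.
    nra. }
  assert (HT2 : Rabs T2 <= b * A / 16).
  { unfold T2. rewrite !Rabs_mult. rewrite (Rabs_right (y c2)) by lra.
    rewrite (Rabs_right a) by lra.
    assert (Rabs (by_ x2 y2) * Rabs (Hf c2) <= Bb * (b * A / (16 * a * Bb))).
    { apply Rmult_le_compat; try apply Rabs_pos; lra. }
    assert (Bb * (b * A / (16 * a * Bb)) = b * A / (16 * a)) by (field; lra).
    assert (a * (b * A / (16 * a)) = b * A / 16) by (field; lra).
    pose proof (Rabs_pos (by_ x2 y2)). pose proof (Rabs_pos (Hf c2)).
    assert (X : Rabs (by_ x2 y2) * Rabs (Hf c2) <= b * A / (16 * a)) by lra.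
    assert (X0 : 0 <= Rabs (by_ x2 y2) * Rabs (Hf c2)) by (apply Rmult_le_pos; auto).
    replace (a * Rabs (by_ x2 y2) * Rabs (Hf c2) * y c2) with (a * (Rabs (by_ x2 y2) * Rabs (Hf c2)) * y c2) by ring.
    apply Rle_trans with (a * (Rabs (by_ x2 y2) * Rabs (Hf c2)) * 1).
    { apply Rmult_le_compat_l; [apply Rmult_le_pos; lra| lra]. }
    rewrite Rmult_1_r. apply Rle_trans with (a * (b * A / (16 * a))); [apply Rmult_le_compat_l; lra| lra]. }
  pose proof (RRle_abs T2) as HT2'.
  assert (Hsu : 0 < (s - u) * (s - u)).
  { assert (s - u <> 0) by lra. nra. }
  assert (gamma * Hf s * (s - u) < 0).
  { rewrite ID2. assert (0 < b * A) by (apply Rmult_lt_0_compat; lra). assert (Hn : - T1 + T2 < 0) by lra.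
    assert (HP : 0 < gamma * ((s - u) * (s - u))) by (apply Rmult_lt_0_compat; auto).
    apply Rmult_lt_compat_l with (r := gamma * ((s - u) * (s - u))) in Hn; auto.
    rewrite Rmult_0_r in Hn. replace (gamma * (s - u) * (s - u) * (- T1 + T2)) with
      (gamma * ((s - u) * (s - u)) * (- T1 + T2)) by ring. exact Hn. }
  destruct (Rlt_dec (Hf s * (s - u)) 0) as [|Hn]; auto. exfalso.
  apply Rnot_lt_le in Hn. assert (0 <= gamma * (Hf s * (s - u))) by (apply Rmult_le_pos; lra).
  replace (gamma * Hf s * (s - u)) with (gamma * (Hf s * (s - u))) in H by ring. lra.
Qed.

Lemma prop_neg t0 : 0 <= t0 -> Hf t0 <= 0 -> forall t, t0 < t -> Hf t < 0.
Proof.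
  intros Ht0 HH t Ht.
  assert (Start : exists d0, 0 < d0 /\ forall r, t0 < r < t0 + d0 -> 0 < - Hf r).
  { destruct HH as [Hlt|Heq].
    - destruct (CRH t0 Ht0 (- Hf t0) ltac:(lra)) as [d [Hd Hs]].
      exists d; split; auto. intros r Hr.
      assert (Rabs (r - t0) < d) by (apply Rabs_def1; lra).
      specialize (Hs r ltac:(lra) H). apply Rabs_def2 in Hs. lra.
    - destruct (Kzero t0 Ht0 Heq) as [d [Hd Hs]].
      exists d; split; auto. intros r Hr.
      assert (Rabs (r - t0) < d) by (apply Rabs_def1; lra).
      specialize (Hs r ltac:(lra) ltac:(lra) H).
      destruct (Rle_dec (Hf r) 0) as [Hle|Hgt]; [|exfalso].
      + destruct Hle as [|Hz]; [lra|]. rewrite Hz, Rmult_0_l in Hs. lra.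
      + apply Rnot_le_lt in Hgt. assert (0 < Hf r * (r - t0)) by (apply Rmult_lt_0_compat; lra). lra. }
  destruct Start as [d0 [Hd0 Hst]].
  destruct (Rlt_dec (Hf t) 0) as [|Hn]; auto. exfalso. apply Rnot_lt_le in Hn.
  destruct (first_exit (fun s => - Hf s) t0 t d0 Ht0 (fun c Hc => CR_opp _ _ (CRH c Hc)) Hd0 Hst Ht
     ltac:(lra)) as [m [Hm [Hpos Hm0]]].
  assert (Hfm : Hf m = 0) by lra.
  destruct (Kzero m ltac:(lra) Hfm) as [d [Hd Hs]].
  set (r := Rmax (m - d/2) ((t0 + m)/2)).
  assert (Hr : t0 < r < m /\ m - d < r).
  { unfold r, Rmax; destruct Rle_dec; lra. }
  assert (Rabs (r - m) < d) by (apply Rabs_def1; lra).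
  specialize (Hs r ltac:(lra) ltac:(lra) H). specialize (Hpos r ltac:(lra)).
  assert (0 < Hf r * (r - m)).
  { replace (Hf r * (r - m)) with ((- Hf r) * (m - r)) by ring. apply Rmult_lt_0_compat; lra. }
  lra.
Qed.

Lemma y_mono s t : 0 <= s -> s < t ->
  ((forall c, s < c < t -> Hf c < 0) -> y t < y s) /\
  ((forall c, s < c < t -> 0 < Hf c) -> y s < y t).
Proof.
  intros Hs Hst. destruct (MVT0 y dyf s t Hdy CRy Hs Hst) as [c [Hc E]].
  assert (Hyc : 0 < y c) by (apply ypos; lra).
  unfold dyf in E. fold (Hf c) in E. split; intros HH; specialize (HH c Hc).
  - assert (0 < gamma * (- Hf c) * y c * (t - s)) by
      (repeat apply Rmult_lt_0_compat; lra). lra.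
  - assert (0 < gamma * Hf c * y c * (t - s)) by
      (repeat apply Rmult_lt_0_compat; lra). lra.
Qed.

Lemma exists_nonpos : 0 < Hf 0 -> exists t1, 0 < t1 /\ Hf t1 <= 0.
Proof.
  intros H0. apply NNPP. intros Hn.
  assert (Hall : forall t, 0 < t -> 0 < Hf t).
  { intros t Ht. apply Rnot_le_lt. intros Hle. apply Hn. exists t; auto. }
  assert (Hyg : forall t, 0 <= t -> y0 <= y t).
  { intros t Ht. destruct (Req_dec t 0) as [->|Hne]; [rewrite Hy00; lra|].
    rewrite <- Hy00. left. apply (proj2 (y_mono 0 t ltac:(lra) ltac:(lra))).
    intros c Hc; apply Hall; lra. }
  set (T := 2 / (gamma * y0)).
  assert (HT : 0 < T) by (apply Rdiv_lt_0_compat; [lra| apply Rmult_lt_0_compat; auto]).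
  destruct (MVT0 x dxf 0 T Hdx CRx ltac:(lra) HT) as [c [Hc E]].
  unfold dxf in E. rewrite Hx0 in E.
  assert (HR : 1 < Rnum gamma beta (x c) (y c)) by (pose proof (Hall c ltac:(lra)); unfold Hf in *; lra).
  assert (Hyc : y0 <= y c) by (apply Hyg; lra).
  assert (gamma * y0 <= gamma * Rnum gamma beta (x c) (y c) * y c).
  { apply Rle_trans with (gamma * 1 * y0); [lra|].
    apply Rmult_le_compat; try lra. apply Rmult_le_compat_l; lra. }
  assert (gamma * y0 * T = 2) by (unfold T; field; split; lra).
  assert (gamma * y0 * T <= gamma * Rnum gamma beta (x c) (y c) * y c * T)
    by (apply Rmult_le_compat_r; lra).
  pose proof (HinS T ltac:(lra)) as HS. unfold inS in HS, HS0. lra.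
Qed.

Theorem main_thm :
  (Rnum gamma beta x0 y0 <= 1 ->
     forall s t, 0 <= s -> s < t -> y t < y s) /\
  (Rnum gamma beta x0 y0 > 1 ->
     exists th, 0 <= th /\
       (forall s t, 0 <= s -> s < t -> t <= th -> y s < y t) /\
       (forall s t, th <= s -> s < t -> y t < y s)).
Proof.
  assert (E0 : Hf 0 = Rnum gamma beta x0 y0 - 1) by (unfold Hf; rewrite Hx0, Hy00; auto).
  split.
  - intros HR s t Hs Hst. apply (proj1 (y_mono s t Hs Hst)).
    intros c Hc. apply (prop_neg 0); lra.
  - intros HR. assert (H0 : 0 < Hf 0) by lra.
    destruct (exists_nonpos H0) as [t1 [Ht1 Hft1]].
    destruct (CRH 0 ltac:(lra) (Hf 0) H0) as [d0 [Hd0 Hs0]].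
    assert (Hst : forall r, 0 < r < 0 + d0 -> 0 < Hf r).
    { intros r Hr. assert (Rabs (r - 0) < d0) by (apply Rabs_def1; lra).
      specialize (Hs0 r ltac:(lra) H). apply Rabs_def2 in Hs0. lra. }
    destruct (first_exit Hf 0 t1 d0 ltac:(lra) CRH Hd0 Hst Ht1 Hft1) as [m [Hm [Hpos Hm0]]].
    exists m. split; [lra|]. split.
    + intros s t Hs Hst' Htm. apply (proj2 (y_mono s t Hs Hst')).
      intros c Hc; apply Hpos; lra.
    + intros s t Hs Hst'. apply (proj1 (y_mono s t ltac:(lra) Hst')).
      intros c Hc. apply (prop_neg m); lra.
Qed.

End Main.


Theorem proposition2 (gamma : R) (beta bx by_ : R -> R -> R)
  (x0 y0 : R) (x y : R -> R) :
  0 < gamma ->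
  (forall a b, inS a b -> 0 < beta a b) ->
  C1_on_S beta bx by_ ->
  (forall a b, inS a b -> a * bx a b + beta a b > 0) ->
  inS x0 y0 -> 0 < y0 ->
  is_BFSIR_solution gamma beta x0 y0 x y ->
  (Rnum gamma beta x0 y0 <= 1 ->
     forall s t, 0 <= s -> s < t -> y t < y s) /\
  (Rnum gamma beta x0 y0 > 1 ->
     exists th, 0 <= th /\
       (forall s t, 0 <= s -> s < t -> t <= th -> y s < y t) /\
       (forall s t, th <= s -> s < t -> y t < y s)).
Proof.
  intros Hg Hb HC Hs HS Hy Hsol.
  eapply main_thm; eauto.
Qed.
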